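(* Let $\mathbf k=(k_1,\ldots,k_r)\in\mathbb N^r$, $\mathbf m=(m_1,\ldots,m_p)\in\mathbb N^p$ with $m_p\ge2$, $\boldsymbol\eta\in\{\pm1\}^r$, $\boldsymbol\varepsilon\in\{\pm1\}^p$, and $\underline\eta=\eta_1\cdots\eta_r$. Then \[ M\big(m_p,\ldots,m_1,k_1+1,k_2,\ldots,k_r;\underline\eta\,\mathbf q(\boldsymbol\varepsilon),\mathbf p(\boldsymbol\eta)\big) =\sum_{j=1}^p(-1)^{j-1}M\big(m_p,\ldots,m_j;\mathbf q(\varepsilon_{j+1},\ldots,\varepsilon_p),1\big)\,M\Big(\big(\mathbf k;\mathbf p(\boldsymbol\eta)\big)\circledast\big(1,m_1,\ldots,m_{j-1};\mathbf p(\varepsilon_1,\ldots,\varepsilon_j)\big)^\star\Big) \] \[ +\sum_{j=1}^p(-1)^{j-1}M\big(m_p,\ldots,m_j;-\mathbf q(\varepsilon_{j+1},\ldots,\varepsilon_p),-1\big)\,M\Big(\big(\mathbf k;\mathbf p(\boldsymbol\eta)\big)\circledast\big(1,m_1,\ldots,m_{j-1};-\mathbf p(\varepsilon_1,\ldots,\varepsilon_j)\big)^\star\Big) +2(-1)^pM\Big(\big(\mathbf k;\mathbf p(\boldsymbol\eta)\big)\circledast\big(1,\mathbf m;0,\underline\eta\,\mathbf r(\boldsymbol\varepsilon)\big)^\star\Big), \] where for $j=p$ the sign vectors $(\pm\mathbf q(\emptyset),\pm1)$ are just $(\pm1)$.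
   Context: For $\boldsymbol\varepsilon=(\varepsilon_1,\ldots,\varepsilon_r)\in\{\pm1\}^r$: $\mathbf p(\boldsymbol\varepsilon)=(\varepsilon_1\cdots\varepsilon_r,\varepsilon_2\cdots\varepsilon_r,\ldots,\varepsilon_r)$, $\mathbf q(\boldsymbol\varepsilon)=(\varepsilon_1\cdots\varepsilon_r,\ldots,\varepsilon_1\varepsilon_2,\varepsilon_1)$, $\mathbf r(\boldsymbol\varepsilon)=(\varepsilon_1,\varepsilon_1\varepsilon_2,\ldots,\varepsilon_1\cdots\varepsilon_r)$; $a\boldsymbol\varepsilon$ is componentwise. Multiple mixed value: $M(\mathbf k;\boldsymbol\varepsilon)=\sum_{n_1>\cdots>n_r>0}\prod_j(1+\varepsilon_j(-1)^{n_j})/n_j^{k_j}$ ($k_1\ge2$). $M_n$, $M^\star_n$ are the truncations to $n\ge n_1>\cdots$ resp. $n\ge n_1\ge\cdots\ge n_r\ge1$ (empty $=1$). Convoluted MMV: $M((\mathbf k;\boldsymbol\eta)\circledast(\mathbf l;\boldsymbol\varepsilon)^\star)=\sum_{n\ge1}\frac{M_{n-1}(k_2,\ldots,k_r;\eta_2,\ldots,\eta_r)M^\star_n(l_2,\ldots,l_s;\varepsilon_2,\ldots,\varepsilon_s)}{n^{k_1+l_1}}\cdot\frac{(1+\varepsilon_1(-1)^n)(1+\eta_1(-1)^n)}{2}$, for $\eta_1,\varepsilon_1\in\{\pm1,0\}$ not both $0$ and all other signs in $\{\pm1\}$. *)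

(* Defs.v *)
From Stdlib Require Import Reals List.
From Coquelicot Require Import Coquelicot.
Import ListNotations.
Open Scope R_scope.

Fixpoint sumR (f : nat -> R) (n : nat) : R :=
  match n with
  | O => 0
  | S n' => sumR f n' + f n
  end.

Definition mterm (k : nat) (e : R) (m : nat) : R :=
  (1 + e * (-1) ^ m) / (INR m) ^ k.

(* M_n(k;e) = sum_{n >= n1 > ... > nr > 0} prod_j (1+e_j(-1)^{n_j})/n_j^{k_j},
   indices/signs given as a list of pairs (k_j, e_j); empty sum/product = 1 *)
Fixpoint Mtr (n : nat) (l : list (nat * R)) : R :=
  match l with
  | [] => 1
  | (k, e) :: l' => sumR (fun m => mterm k e m * Mtr (m - 1)%nat l') n
  end.

(* M*_n(k;e) = sum_{n >= n1 >= ... >= nr >= 1} ... *)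
Fixpoint Mstr (n : nat) (l : list (nat * R)) : R :=
  match l with
  | [] => 1
  | (k, e) :: l' => sumR (fun m => mterm k e m * Mstr m l') n
  end.

Definition MMV (k : list nat) (e : list R) : R :=
  real (Lim_seq (fun n => Mtr n (combine k e))).

Definition MConv (k : list nat) (eta : list R) (l : list nat) (eps : list R) : R :=
  match combine k eta, combine l eps with
  | (k1, eta1) :: a', (l1, eps1) :: b' =>
      real (Lim_seq (fun N => sumR (fun n =>
        Mtr (n - 1)%nat a' * Mstr n b' / (INR n) ^ (k1 + l1)
        * ((1 + eps1 * (-1) ^ n) * (1 + eta1 * (-1) ^ n) / 2)) N))
  | _, _ => 0
  end.

Definition prodR (l : list R) : R := fold_right Rmult 1 l.

Fixpoint pvec (l : list R) : list R :=
  match l with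
  | [] => []
  | e :: l' => (e * prodR l') :: pvec l'
  end.

Fixpoint rvec (l : list R) : list R :=
  match l with
  | [] => []
  | e :: l' => e :: map (Rmult e) (rvec l')
  end.

Definition qvec (l : list R) : list R := rev (rvec l).

Definition is_sign (x : R) : Prop := x = 1 \/ x = -1.

(* Main.v *)
Require Import Defs.
From Stdlib Require Import Reals List Lia Lra.
From Coquelicot Require Import Coquelicot.
Import ListNotations.
Open Scope R_scope.

Lemma sumR_ext f g n : (forall m, (1 <= m <= n)%nat -> f m = g m) -> sumR f n = sumR g n.
Proof. induction n; simpl; intros H; auto. rewrite IHn, H; [reflexivity|lia|intros; apply H; lia]. Qed.

Lemma sumR_plus f g n : sumR (fun m => f m + g m) n = sumR f n + sumR g n.
Proof. induction n; simpl; [lra|rewrite IHn; lra]. Qed.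

Lemma sumR_scal c f n : sumR (fun m => c * f m) n = c * sumR f n.
Proof. induction n; simpl; [lra|rewrite IHn; lra]. Qed.

Lemma sumR_zero n : sumR (fun _ => 0) n = 0.
Proof. induction n; simpl; [lra|rewrite IHn; lra]. Qed.

Lemma sumR_swap F n K : sumR (fun m => sumR (fun x => F m x) K) n = sumR (fun x => sumR (fun m => F m x) n) K.
Proof.
  induction n; simpl.
  - now rewrite sumR_zero.
  - rewrite IHn, <- sumR_plus. reflexivity.
Qed.

Fixpoint sum0 (f : nat -> R) (n : nat) : R :=
  match n with O => 0 | S n' => sum0 f n' + f n' end.

Lemma sum0_plus f g n : sum0 (fun m => f m + g m) n = sum0 f n + sum0 g n.
Proof. induction n; simpl; [lra|rewrite IHn; lra]. Qed.
Lemma sum0_scal c f n : sum0 (fun m => c * f m) n = c * sum0 f n.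
Proof. induction n; simpl; [lra|rewrite IHn; lra]. Qed.
Lemma sum0_ext f g n : (forall m, (m < n)%nat -> f m = g m) -> sum0 f n = sum0 g n.
Proof. induction n; simpl; intros H; auto. rewrite IHn, H; [reflexivity|lia|intros; apply H; lia]. Qed.
Lemma sum0_shift f n : sum0 f (S n) = f O + sum0 (fun j => f (S j)) n.
Proof. induction n; simpl in *; [lra|]. rewrite IHn. lra. Qed.
Lemma sumR_sum0 F n K : sumR (fun m => sum0 (fun x => F m x) K) n = sum0 (fun x => sumR (fun m => F m x) n) K.
Proof.
  induction K; simpl. now rewrite sumR_zero.
  rewrite sumR_plus, IHK. reflexivity.
Qed.

Lemma Mtr_nil n : Mtr n [] = 1. Proof. destruct n; reflexivity. Qed.
Lemma Mtr_cons n k e l : Mtr n ((k,e)::l) = sumR (fun m => mterm k e m * Mtr (m - 1)%nat l) n.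
Proof. destruct n; reflexivity. Qed.
Lemma Mstr_nil n : Mstr n [] = 1. Proof. destruct n; reflexivity. Qed.
Lemma Mstr_cons n k e l : Mstr n ((k,e)::l) = sumR (fun m => mterm k e m * Mstr m l) n.
Proof. destruct n; reflexivity. Qed.

Fixpoint MtrG (n : nat) (l : list (nat * R)) (G : nat -> R) {struct l} : R :=
  match l with
  | [] => G n
  | (k, e) :: l' => sumR (fun m => mterm k e m * MtrG (m - 1)%nat l' G) n
  end.

Lemma MtrG_app n A B : Mtr n (A ++ B) = MtrG n A (fun t => Mtr t B).
Proof.
  revert n; induction A as [|[k e] A IH]; intros n; simpl; try reflexivity.
  rewrite Mtr_cons. apply sumR_ext; intros; now rewrite IH.
Qed.

Lemma MtrG_ext n A G1 G2 : (forall t, (t <= n)%nat -> G1 t = G2 t) -> MtrG n A G1 = MtrG n A G2.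
Proof.
  revert n; induction A as [|[k e] A IH]; intros n H; simpl; [apply H; lia|].
  apply sumR_ext; intros; f_equal; apply IH; intros; apply H; lia.
Qed.

Lemma MtrG_plus n A G1 G2 : MtrG n A (fun t => G1 t + G2 t) = MtrG n A G1 + MtrG n A G2.
Proof.
  revert n; induction A as [|[k e] A IH]; intros n; simpl; try reflexivity.
  rewrite <- sumR_plus. apply sumR_ext; intros; rewrite IH; ring.
Qed.

Lemma MtrG_scal n A c G : MtrG n A (fun t => c * G t) = c * MtrG n A G.
Proof.
  revert n; induction A as [|[k e] A IH]; intros n; simpl; try reflexivity.
  rewrite <- sumR_scal. apply sumR_ext; intros; rewrite IH; ring.
Qed.

Lemma MtrG_sum n A F K : MtrG n A (fun t => sumR (fun x => F x t) K) = sumR (fun x => MtrG n A (F x)) K.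
Proof.
  induction K; simpl.
  - revert n; induction A as [|[k e] A IH]; intros n; simpl; auto.
    transitivity (sumR (fun _ : nat => 0) n); [|apply sumR_zero]. apply sumR_ext; intros; rewrite IH; ring.
  - rewrite MtrG_plus, IHK. reflexivity.
Qed.

Lemma MtrG_one n A : MtrG n A (fun _ => 1) = Mtr n A.
Proof.
  revert n; induction A as [|[k e] A IH]; intros n; simpl. now rewrite Mtr_nil.
  rewrite Mtr_cons.
  apply sumR_ext; intros; now rewrite IH.
Qed.

Lemma MtrG_snoc n A k e G : MtrG n (A ++ [(k, e)]) G =
  MtrG n A (fun t => sumR (fun y => mterm k e y * G (y - 1)%nat) t).
Proof.
  revert n; induction A as [|[k' e'] A IH]; intros n; simpl; auto.
  apply sumR_ext; intros; now rewrite IH.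
Qed.

Definition indk (x t : nat) : R := if Nat.leb x t then 1 else 0.

Lemma sum_ind f x t : sumR (fun y => f y * indk y t) x = sumR f (Nat.min x t).
Proof.
  induction x. { destruct t; reflexivity. }
  cbn [sumR]. unfold indk at 2. destruct (Nat.leb_spec (S x) t).
  - rewrite IHx, Nat.min_l, Nat.min_l by lia. cbn [sumR]. ring.
  - rewrite IHx, Nat.min_r, Nat.min_r by lia. ring.
Qed.

Lemma sum_ind2 f x t : sumR (fun y => f y * indk x (y - 1)) t = sumR f t - sumR f (Nat.min t x).
Proof.
  induction t. { destruct x; simpl; ring. }
  cbn [sumR]. unfold indk at 2. destruct (Nat.leb_spec x (S t - 1)).
  - rewrite IHt, (Nat.min_r t x), (Nat.min_r (S t) x) by lia. ring.
  - rewrite IHt, (Nat.min_l t x), (Nat.min_l (S t) x) by lia. cbn [sumR]. ring.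
Qed.

Lemma core L x N : (x <= N)%nat ->
  MtrG N (rev L) (indk x) =
  sum0 (fun j => (-1) ^ j * Mtr N (rev (skipn j L)) * Mstr x (firstn j L)) (length L)
  + (-1) ^ (length L) * Mstr x L.
Proof.
  revert x; induction L as [|[k e] L IH]; intros x Hx.
  - simpl. rewrite Mstr_nil. unfold indk. destruct (Nat.leb_spec x N); [lra|lia].
  - simpl rev. rewrite MtrG_snoc.
    rewrite (MtrG_ext _ _ _ (fun t => sumR (mterm k e) t + (-1) * sumR (fun y => mterm k e y * indk y t) x)).
    2:{ intros t Ht. rewrite sum_ind2, sum_ind. rewrite Nat.min_comm. ring. }
    rewrite MtrG_plus, MtrG_scal, MtrG_sum.
    rewrite (sumR_ext (fun y => MtrG N (rev L) (fun t => mterm k e y * indk y t))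
      (fun y => sum0 (fun j => (-1) ^ j * Mtr N (rev (skipn j L)) * (mterm k e y * Mstr y (firstn j L))) (length L)
        + (-1) ^ length L * (mterm k e y * Mstr y L))).
    2:{ intros y Hy. rewrite MtrG_scal, IH by lia. rewrite Rmult_plus_distr_l, <- sum0_scal.
      rewrite (sum0_ext _ (fun j => (-1) ^ j * Mtr N (rev (skipn j L)) * (mterm k e y * Mstr y (firstn j L)))). ring. intros; ring. }
    rewrite sumR_plus, sumR_sum0, sumR_scal.
    rewrite (sum0_ext _ (fun j => (-1) ^ j * Mtr N (rev (skipn j L)) * sumR (fun y => mterm k e y * Mstr y (firstn j L)) x)).
    2:{ intros; apply sumR_scal. }
    simpl length. rewrite sum0_shift.
    rewrite (sum0_ext (fun j => (-1) ^ S j * Mtr N (rev (skipn (S j) ((k, e) :: L))) * Mstr x (firstn (S j) ((k, e) :: L)))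
      (fun j => (-1) * ((-1) ^ j * Mtr N (rev (skipn j L)) * sumR (fun y => mterm k e y * Mstr y (firstn j L)) x))).
    2:{ intros; simpl. rewrite Mstr_cons. ring. }
    rewrite sum0_scal.
    assert (E : MtrG N (rev L) (sumR (mterm k e)) = Mtr N (rev ((k,e)::L))).
    { simpl. rewrite MtrG_app. apply MtrG_ext. intros. rewrite Mtr_cons. apply sumR_ext; intros. rewrite Mtr_nil; ring. }
    rewrite E. simpl. rewrite Mstr_nil, Mstr_cons. ring.
Qed.

Lemma combine_app {A B} (a b : list A) (c d : list B) : length a = length c ->
  combine (a ++ b) (c ++ d) = combine a c ++ combine b d.
Proof.
  revert c; induction a as [|x a IH]; intros [|y c] H; simpl in *; try lia; auto.
  rewrite IH by lia; auto.
Qed.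

Lemma combine_rev {A B} (a : list A) (c : list B) : length a = length c ->
  combine (rev a) (rev c) = rev (combine a c).
Proof.
  revert c; induction a as [|x a IH]; intros [|y c] H; simpl in *; try lia; auto.
  rewrite combine_app by (rewrite !length_rev; lia). rewrite IH by lia. reflexivity.
Qed.

Lemma combine_skipn {A B} (a : list A) (c : list B) n :
  skipn n (combine a c) = combine (skipn n a) (skipn n c).
Proof.
  revert a c; induction n; intros [|x a] [|y c]; simpl; auto.
  destruct (skipn n a); reflexivity.
Qed.

Lemma skipn_nth {A} (l : list A) j d : (j < length l)%nat -> skipn j l = nth j l d :: skipn (S j) l.
Proof.
  revert l; induction j; intros [|x l] H; simpl in *; try lia; auto.
  apply IHj; lia.
Qed.

Lemma firstn_S_nth {A} (l : list A) j d : (j < length l)%nat -> firstn (S j) l = firstn j l ++ [nth j l d].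
Proof.
  revert l; induction j; intros [|x l] H; simpl in *; try lia; auto.
  f_equal. rewrite <- IHj by lia. reflexivity.
Qed.

Lemma prodR_app a b : prodR (a ++ b) = prodR a * prodR b.
Proof. induction a; simpl; [ring|rewrite IHa; ring]. Qed.

Lemma rvec_skipn l j : skipn j (rvec l) = map (Rmult (prodR (firstn j l))) (rvec (skipn j l)).
Proof.
  revert l; induction j; intros l.
  - simpl. rewrite map_ext with (g := fun x => x) by (intros; ring). now rewrite map_id.
  - destruct l as [|e l]; simpl; auto.
    rewrite skipn_map, IHj, map_map. apply map_ext; intros; ring.
Qed.

Lemma rvec_firstn l n : rvec (firstn n l) = firstn n (rvec l).
Proof.
  revert l; induction n; intros [|e l]; simpl; auto.
  rewrite IHn, firstn_map. reflexivity.
Qed.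

Lemma length_rvec l : length (rvec l) = length l.
Proof. induction l; simpl; auto. rewrite length_map; auto. Qed.

Lemma length_pvec l : length (pvec l) = length l.
Proof. induction l; simpl; auto. Qed.

Lemma length_qvec l : length (qvec l) = length l.
Proof. unfold qvec. rewrite length_rev. apply length_rvec. Qed.

Lemma sign_sq x : is_sign x -> x * x = 1.
Proof. intros [-> | ->]; ring. Qed.

Lemma prodR_sign l : List.Forall is_sign l -> is_sign (prodR l).
Proof.
  induction 1; simpl. left; reflexivity.
  destruct H as [-> | ->]; destruct IHForall as [-> | ->]; [left|right|right|left]; ring.
Qed.

Lemma pvec_rvec l : List.Forall is_sign l ->
  pvec l = map (Rmult (prodR l)) (firstn (length l) (1 :: rvec l)).
Proof.
  induction 1 as [|e l He Hl IH]; simpl; auto.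
  f_equal. ring.
  rewrite IH. destruct l as [|e' l']. simpl. reflexivity.
  change (firstn (length (e' :: l')) (e :: map (Rmult e) (rvec (e' :: l'))))
    with (firstn (S (length l')) (e :: map (Rmult e) (rvec (e' :: l')))).
  rewrite firstn_cons.
  change (firstn (length (e' :: l')) (1 :: rvec (e' :: l')))
    with (firstn (S (length l')) (1 :: rvec (e' :: l'))).
  rewrite firstn_cons, firstn_map. pose proof (sign_sq e He) as Hee.
  set (P := prodR (e' :: l')). simpl map. f_equal.
  - replace (e * P * e) with ((e * e) * P) by ring. rewrite Hee; ring.
  - rewrite map_map. apply map_ext. intros.
    replace (e * P * (e * a)) with ((e * e) * P * a) by ring. rewrite Hee; ring.
Qed.

Definition q (n : nat) : R := sqrt (sqrt (INR n)).

Lemma q_ge0 n : 0 <= q n.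
Proof. apply sqrt_pos. Qed.

Lemma q_mono n m : (n <= m)%nat -> q n <= q m.
Proof. intros H. apply sqrt_le_1_alt, sqrt_le_1_alt, le_INR, H. Qed.

Lemma q_ge1 n : (1 <= n)%nat -> 1 <= q n.
Proof. intros H. pose proof (q_mono 1 n H). unfold q in *. simpl INR in H0. rewrite !sqrt_1 in H0. exact H0. Qed.

Lemma q_sq n : q n * q n = sqrt (INR n).
Proof. unfold q. apply sqrt_sqrt, sqrt_pos. Qed.

Lemma q4 n : (q n * q n) * (q n * q n) = INR n.
Proof. rewrite q_sq. apply sqrt_sqrt, pos_INR. Qed.

Lemma pow4_le a b : 0 <= a -> 0 <= b -> (a*a)*(a*a) <= (b*b)*(b*b) -> a <= b.
Proof.
  intros Ha Hb H. destruct (Rle_or_lt a b) as [|Hlt]; auto.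
  exfalso. assert (b*b < a*a) by nra. assert ((b*b)*(b*b) < (a*a)*(a*a)) by nra. lra.
Qed.

Lemma q_S n : (1 <= n)%nat -> q (S n) <= 2 * q n.
Proof.
  intros H. apply pow4_le. apply q_ge0. pose proof (q_ge0 n); lra.
  replace (2 * q n * (2 * q n) * (2 * q n * (2 * q n))) with (16 * ((q n * q n) * (q n * q n))) by ring.
  rewrite !q4. rewrite S_INR. apply le_INR in H. simpl in H. lra.
Qed.

Lemma inv_le_aux c d : 0 < c -> 1 <= d * c -> / c <= d.
Proof.
  intros Hc H. apply Rmult_le_reg_l with c; auto. rewrite Rinv_r by lra. lra.
Qed.

Lemma sum_q n : sumR (fun m => q m / INR m) n <= 4 * q n.
Proof.
  induction n. simpl. unfold q. simpl. rewrite sqrt_0, sqrt_0. lra.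
  cbn [sumR]. set (a := q (S n)). set (b := q n).
  assert (Ha : 1 <= a) by (apply q_ge1; lia).
  assert (Hb : 0 <= b) by apply q_ge0.
  assert (Hab : b <= a) by (apply q_mono; lia).
  assert (E : a*a*(a*a) = b*b*(b*b) + 1) by (unfold a, b; rewrite !q4, S_INR; ring).
  assert (F1 : (a - b) * (a*a*a + a*a*b + a*b*b + b*b*b) = 1) by nra.
  assert (F2 : a*a*a + a*a*b + a*b*b + b*b*b <= 4 * (a*a*a)).
  { assert (b*b <= a*a) by nra. assert (b*b*b <= a*a*a) by nra. assert (a*a*b <= a*a*a) by nra.
    assert (a*b*b <= a*a*a) by nra. lra. }
  assert (Hk : 1 <= 4 * (a - b) * (a*a*a)).
  { rewrite <- F1. replace (4 * (a - b) * (a*a*a)) with ((a - b) * (4 * (a*a*a))) by ring.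
    apply Rmult_le_compat_l; lra. }
  replace (INR (S n)) with (a*a*(a*a)) by (unfold a; apply q4).
  replace (a / (a * a * (a * a))) with (/ (a*a*a)) by (field; lra).
  assert (/ (a*a*a) <= 4 * (a - b)).
  { apply inv_le_aux. apply Rmult_lt_0_compat; [apply Rmult_lt_0_compat|]; lra. lra. }
  fold b in IHn. lra.
Qed.

Lemma sum32_aux n : (1 <= n)%nat ->
  sumR (fun m => / (INR m * sqrt (INR m))) n + 2 * / sqrt (INR n) <= 3.
Proof.
  induction n as [|n IH]; intros H. lia.
  destruct (Nat.eq_dec n 0) as [->|Hn].
  - simpl. rewrite Rplus_0_l, Rmult_1_l, sqrt_1. lra.
  - specialize (IH ltac:(lia)). cbn [sumR].
    set (s := sqrt (INR n)). set (t := sqrt (INR (S n))).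
    assert (Hs1 : 1 <= s). { unfold s. rewrite <- sqrt_1. apply sqrt_le_1_alt. apply (le_INR 1); lia. }
    assert (Hst : s <= t) by (apply sqrt_le_1_alt, le_INR; lia).
    assert (Es : s * s = INR n) by (apply sqrt_sqrt, pos_INR).
    assert (Et : t * t = INR n + 1) by (unfold t; rewrite sqrt_sqrt, S_INR; [ring| apply pos_INR]).
    replace (INR (S n)) with (t * t) by (rewrite Et, S_INR; ring).
    assert (K : / (t * t * t) + 2 * / t <= 2 * / s).
    { assert (Hk: s + 2 * s * (t*t) <= 2 * (t*t*t)) by nra.
      replace (/ (t*t*t) + 2 * / t) with ((s + 2 * s * (t*t)) / (s * (t*t*t))) by (field; lra).
      replace (2 * / s) with ((2 * (t*t*t)) / (s * (t*t*t))) by (field; lra).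
      apply Rmult_le_compat_r; auto. apply Rlt_le, Rinv_0_lt_compat. nra. }
    fold s in IH. lra.
Qed.

Lemma sum32 n : sumR (fun m => / (INR m * sqrt (INR m))) n <= 3.
Proof.
  destruct n. simpl; lra.
  pose proof (sum32_aux (S n) ltac:(lia)).
  assert (0 <= 2 * / sqrt (INR (S n))).
  { apply Rmult_le_pos. lra. apply Rlt_le, Rinv_0_lt_compat, sqrt_lt_R0. apply lt_0_INR; lia. }
  lra.
Qed.

Definition good (l : list (nat * R)) : Prop :=
  List.Forall (fun p => (1 <= fst p)%nat /\ -1 <= snd p <= 1) l.

Lemma pow_m1 m : (-1) ^ m = 1 \/ (-1) ^ m = -1.
Proof. induction m; simpl. auto. destruct IHm as [-> | ->]; [right|left]; ring. Qed.

Lemma sumR_le f g n : (forall m, (1 <= m <= n)%nat -> f m <= g m) -> sumR f n <= sumR g n.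
Proof. induction n; simpl; intros H. lra. apply Rplus_le_compat. apply IHn; intros; apply H; lia. apply H; lia. Qed.

Lemma sumR_nonneg f n : (forall m, (1 <= m <= n)%nat -> 0 <= f m) -> 0 <= sumR f n.
Proof. intros H. rewrite <- (sumR_zero n). apply sumR_le. auto. Qed.

Lemma INR_ge1 m : (1 <= m)%nat -> 1 <= INR m.
Proof. intros; apply (le_INR 1); lia. Qed.

Lemma mterm_nonneg k e m : (1 <= m)%nat -> -1 <= e <= 1 -> 0 <= mterm k e m.
Proof.
  intros Hm He. unfold mterm. pose proof (INR_ge1 m Hm).
  apply Rmult_le_pos. destruct (pow_m1 m) as [-> | ->]; lra.
  apply Rlt_le, Rinv_0_lt_compat, pow_lt. lra.
Qed.

Lemma mterm_le k e m j : (1 <= m)%nat -> (j <= k)%nat -> -1 <= e <= 1 -> mterm k e m <= 2 / INR m ^ j.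
Proof.
  intros Hm Hk He. unfold mterm. pose proof (INR_ge1 m Hm).
  apply Rmult_le_compat. destruct (pow_m1 m) as [-> | ->]; lra.
  apply Rlt_le, Rinv_0_lt_compat, pow_lt. lra.
  destruct (pow_m1 m) as [-> | ->]; lra.
  apply Rinv_le_contravar. apply pow_lt; lra. apply Rle_pow; auto.
Qed.

Lemma Mtr_nonneg n l : good l -> 0 <= Mtr n l.
Proof.
  revert n; induction l as [|[k e] l IH]; intros n Hg.
  rewrite Mtr_nil; lra.
  inversion Hg as [|? ? [Hk He] Hg']; subst. rewrite Mtr_cons.
  apply sumR_nonneg. intros. apply Rmult_le_pos. apply mterm_nonneg; auto; lia. apply IH; auto.
Qed.

Lemma Mstr_nonneg n l : good l -> 0 <= Mstr n l.
Proof.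
  revert n; induction l as [|[k e] l IH]; intros n Hg.
  rewrite Mstr_nil; lra.
  inversion Hg as [|? ? [Hk He] Hg']; subst. rewrite Mstr_cons.
  apply sumR_nonneg. intros. apply Rmult_le_pos. apply mterm_nonneg; auto; lia. apply IH; auto.
Qed.

Lemma Mtr_bound n l : good l -> Mtr n l <= 16 ^ length l * q (S n).
Proof.
  revert n; induction l as [|[k e] l IH]; intros n Hg.
  - rewrite Mtr_nil. simpl. pose proof (q_ge1 (S n) ltac:(lia)). lra.
  - inversion Hg as [|? ? [Hk He] Hg']; subst. rewrite Mtr_cons.
    apply Rle_trans with (sumR (fun m => 2 * 16 ^ length l * (q m / INR m)) n).
    + apply sumR_le. intros m Hm. replace (S (m - 1)) with m in IH by lia.
      pose proof (IH (m - 1)%nat Hg'). replace (S (m - 1)) with m in H by lia.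
      pose proof (mterm_le k e m 1 ltac:(lia) Hk He). rewrite pow_1 in H0.
      pose proof (mterm_nonneg k e m ltac:(lia) He).
      apply Rle_trans with (2 / INR m * (16 ^ length l * q m)).
      apply Rmult_le_compat; auto. apply Mtr_nonneg; auto.
      right. unfold Rdiv. ring.
    + rewrite sumR_scal. pose proof (sum_q n). pose proof (q_mono n (S n) ltac:(lia)).
      pose proof (pow_le 16 (length l) ltac:(lra)). simpl length. rewrite <- tech_pow_Rmult.
      assert (16 ^ length l * sumR (fun m : nat => q m / INR m) n <= 16 ^ length l * (4 * q n)) by (apply Rmult_le_compat_l; auto).
      assert (16 ^ length l * q n <= 16 ^ length l * q (S n)) by (apply Rmult_le_compat_l; auto).
      pose proof (q_ge0 (S n)). assert (0 <= 16 ^ length l * q (S n)) by (apply Rmult_le_pos; auto). lra.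
Qed.

Lemma Mstr_bound n l : good l -> Mstr n l <= 16 ^ length l * q (S n).
Proof.
  revert n; induction l as [|[k e] l IH]; intros n Hg.
  - rewrite Mstr_nil. simpl. pose proof (q_ge1 (S n) ltac:(lia)). lra.
  - inversion Hg as [|? ? [Hk He] Hg']; subst. rewrite Mstr_cons.
    apply Rle_trans with (sumR (fun m => 4 * 16 ^ length l * (q m / INR m)) n).
    + apply sumR_le. intros m Hm.
      pose proof (IH m Hg'). pose proof (q_S m ltac:(lia)).
      pose proof (mterm_le k e m 1 ltac:(lia) Hk He). rewrite pow_1 in H1.
      pose proof (mterm_nonneg k e m ltac:(lia) He).
      pose proof (pow_le 16 (length l) ltac:(lra)).
      apply Rle_trans with (2 / INR m * (16 ^ length l * (2 * q m))).
      apply Rmult_le_compat; auto. apply Mstr_nonneg; auto. apply Rle_trans with (1 := H).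
      apply Rmult_le_compat_l; auto.
      right. unfold Rdiv. ring.
    + rewrite sumR_scal. pose proof (sum_q n). pose proof (q_mono n (S n) ltac:(lia)).
      pose proof (pow_le 16 (length l) ltac:(lra)). simpl length. rewrite <- tech_pow_Rmult.
      assert (16 ^ length l * sumR (fun m : nat => q m / INR m) n <= 16 ^ length l * (4 * q n)) by (apply Rmult_le_compat_l; auto).
      assert (16 ^ length l * q n <= 16 ^ length l * q (S n)) by (apply Rmult_le_compat_l; auto).
      pose proof (q_ge0 (S n)). assert (0 <= 16 ^ length l * q (S n)) by (apply Rmult_le_pos; auto). lra.
Qed.


Lemma sum_conv f C : 0 <= C -> (forall m, (1 <= m)%nat -> 0 <= f m) ->
  (forall m, (1 <= m)%nat -> f m <= C * / (INR m * sqrt (INR m))) -> ex_finite_lim_seq (sumR f).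
Proof.
  intros HC H0 H1. apply ex_finite_lim_seq_incr with (M := C * 3).
  - intros n. simpl. pose proof (H0 (S n) ltac:(lia)). lra.
  - intros n. apply Rle_trans with (sumR (fun m => C * / (INR m * sqrt (INR m))) n).
    apply sumR_le; intros; apply H1; lia. rewrite sumR_scal. apply Rmult_le_compat_l; auto. apply sum32.
Qed.

Lemma key_ineq1 m : (1 <= m)%nat -> q m / (INR m ^ 2) <= / (INR m * sqrt (INR m)).
Proof.
  intros Hm. pose proof (q_ge1 m Hm). set (x := q m) in *.
  assert (Ex : x * x = sqrt (INR m)) by apply q_sq. rewrite <- Ex.
  assert (Es : (x*x)*(x*x) = INR m) by apply q4. rewrite <- Es.
  replace (x / ((x * x * (x * x)) ^ 2)) with (/ (x*x*x*x*x*x*x)) by (field; lra).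
  apply Rinv_le_contravar. repeat apply Rmult_lt_0_compat; lra.
  assert (1 <= x*x) by nra. assert (x*x <= x*x*x*x) by nra. 
  replace (x*x*x*x*x*x*x) with (x*x*x*x*x*x*x) by ring.
  replace (x * x * (x * x) * (x * x)) with (x*x*x*x*x*x) by ring.
  assert (0 < x*x*x*x*x*x) by (repeat apply Rmult_lt_0_compat; lra). nra.
Qed.

Lemma key_ineq2 m : (1 <= m)%nat -> q m * q (S m) / (INR m ^ 2) <= 2 * / (INR m * sqrt (INR m)).
Proof.
  intros Hm. pose proof (q_S m Hm). pose proof (q_ge1 m Hm).
  apply Rle_trans with (2 * (q m * q m) / (INR m ^ 2)).
  { unfold Rdiv. apply Rmult_le_compat_r. apply Rlt_le, Rinv_0_lt_compat, pow_lt. pose proof (INR_ge1 m Hm); lra.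
    nra. }
  rewrite q_sq. pose proof (INR_ge1 m Hm).
  assert (0 < sqrt (INR m)) by (apply sqrt_lt_R0; lra).
  rewrite <- (sqrt_sqrt (INR m)) at 2 3 by lra.
  right. field. lra.
Qed.

Lemma finite_id L k1 etab B' N :
  let h := fun x => mterm (S k1) etab x * Mtr (x - 1)%nat B' in
  Mtr N (rev L ++ (S k1, etab) :: B') =
  sum0 (fun j => (-1) ^ j * Mtr N (rev (skipn j L)) * sumR (fun x => h x * Mstr x (firstn j L)) N) (length L)
  + (-1) ^ length L * sumR (fun x => h x * Mstr x L) N.
Proof.
  intros h. rewrite MtrG_app.
  rewrite (MtrG_ext _ _ _ (fun t => sumR (fun x => h x * indk x t) N)).
  2:{ intros t Ht. rewrite sum_ind, Nat.min_r by lia. rewrite Mtr_cons. reflexivity. }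
  rewrite MtrG_sum.
  rewrite (sumR_ext _ (fun x => sum0 (fun j => (-1) ^ j * Mtr N (rev (skipn j L)) * (h x * Mstr x (firstn j L))) (length L)
      + (-1) ^ length L * (h x * Mstr x L))).
  2:{ intros x Hx. rewrite MtrG_scal, core by lia. rewrite Rmult_plus_distr_l, <- sum0_scal.
      rewrite (sum0_ext _ (fun j => (-1) ^ j * Mtr N (rev (skipn j L)) * (h x * Mstr x (firstn j L)))). ring. intros; ring. }
  rewrite sumR_plus, sumR_sum0, sumR_scal. f_equal.
  apply sum0_ext; intros. apply sumR_scal.
Qed.

Lemma real_lim u : ex_finite_lim_seq u -> is_lim_seq u (real (Lim_seq u)).
Proof.
  intros H. pose proof (Lim_seq_correct' u H). destruct H as [l Hl].
  rewrite (is_lim_seq_unique _ _ Hl) in *. exact H0.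
Qed.

Lemma efl_ext u v : (forall n, u n = v n) -> ex_finite_lim_seq u -> ex_finite_lim_seq v.
Proof. intros E [l H]. exists l. eapply is_lim_seq_ext; eauto. Qed.

Lemma lim_sum0 (g : nat -> nat -> R) (l : nat -> R) n :
  (forall j, (j < n)%nat -> is_lim_seq (fun N => g N j) (l j)) ->
  is_lim_seq (fun N => sum0 (g N) n) (sum0 l n).
Proof.
  induction n; intros H; simpl.
  - apply is_lim_seq_const.
  - apply is_lim_seq_plus'. apply IHn; intros; apply H; lia. apply H; lia.
Qed.

Lemma sumR_sum0_shift F n : sumR F n = sum0 (fun j => F (S j)) n.
Proof. induction n; simpl; auto. rewrite IHn; auto. Qed.

Lemma Mtr_conv k e l : good ((k, e) :: l) -> (2 <= k)%nat -> ex_finite_lim_seq (fun N => Mtr N ((k, e) :: l)).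
Proof.
  intros Hg Hk. inversion Hg as [|? ? [_ He] Hg']; subst. simpl in He.
  apply efl_ext with (u := sumR (fun m => mterm k e m * Mtr (m - 1)%nat l)).
  { intros; now rewrite Mtr_cons. }
  apply sum_conv with (C := 2 * 16 ^ length l).
  - pose proof (pow_le 16 (length l)); lra.
  - intros. apply Rmult_le_pos. apply mterm_nonneg; auto. apply Mtr_nonneg; auto.
  - intros m Hm. pose proof (mterm_le k e m 2 Hm Hk He).
    pose proof (Mtr_bound (m - 1) l Hg'). replace (S (m - 1)) with m in H0 by lia.
    pose proof (key_ineq1 m Hm). pose proof (pow_le 16 (length l) ltac:(lra)).
    pose proof (mterm_nonneg k e m Hm He). pose proof (Mtr_nonneg (m - 1) l Hg').
    apply Rle_trans with (2 / INR m ^ 2 * (16 ^ length l * q m)).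
    apply Rmult_le_compat; auto.
    replace (2 / INR m ^ 2 * (16 ^ length l * q m)) with (2 * 16 ^ length l * (q m / INR m ^ 2)) by (unfold Rdiv; ring).
    apply Rmult_le_compat_l; auto. lra.
Qed.

Lemma h_conv k1 etab B' l : (1 <= k1)%nat -> -1 <= etab <= 1 -> good B' -> good l ->
  ex_finite_lim_seq (sumR (fun x => mterm (S k1) etab x * Mtr (x - 1)%nat B' * Mstr x l)).
Proof.
  intros Hk He HB Hl.
  apply sum_conv with (C := 2 * (16 ^ length B' * 16 ^ length l) * 2).
  - pose proof (pow_le 16 (length B')); pose proof (pow_le 16 (length l)). assert (0 <= 16 ^ length B' * 16 ^ length l) by (apply Rmult_le_pos; lra). lra.
  - intros. apply Rmult_le_pos; [apply Rmult_le_pos|]. apply mterm_nonneg; auto. apply Mtr_nonneg; auto. apply Mstr_nonneg; auto.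
  - intros m Hm. pose proof (mterm_le (S k1) etab m 2 Hm ltac:(lia) He).
    pose proof (Mtr_bound (m - 1) B' HB). replace (S (m - 1)) with m in H0 by lia.
    pose proof (Mstr_bound m l Hl).
    pose proof (key_ineq2 m Hm). pose proof (pow_le 16 (length l) ltac:(lra)). pose proof (pow_le 16 (length B') ltac:(lra)).
    pose proof (mterm_nonneg (S k1) etab m Hm He). pose proof (Mtr_nonneg (m - 1) B' HB). pose proof (Mstr_nonneg m l Hl).
    pose proof (q_ge0 m). pose proof (q_ge0 (S m)).
    apply Rle_trans with (2 / INR m ^ 2 * (16 ^ length B' * q m) * (16 ^ length l * q (S m))).
    apply Rmult_le_compat; auto. apply Rmult_le_pos; auto. apply Rmult_le_compat; auto.
    replace (2 / INR m ^ 2 * (16 ^ length B' * q m) * (16 ^ length l * q (S m))) with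
      (2 * (16 ^ length B' * 16 ^ length l) * (q m * q (S m) / INR m ^ 2)) by (unfold Rdiv; ring).
    replace (2 * (16 ^ length B' * 16 ^ length l) * 2 * / (INR m * sqrt (INR m))) with
      (2 * (16 ^ length B' * 16 ^ length l) * (2 * / (INR m * sqrt (INR m)))) by ring.
    apply Rmult_le_compat_l; auto.
    apply Rmult_le_pos. lra. apply Rmult_le_pos; auto.
Qed.

Lemma map_fst_combine {A B} (a : list A) (b : list B) : length a = length b -> map fst (combine a b) = a.
Proof. revert b; induction a; intros [|y b] H; simpl in *; try lia; auto. rewrite IHa; auto. Qed.

Lemma last_skipn {A} (l : list A) j d : (j < length l)%nat -> last (skipn j l) d = last l d.
Proof.
  revert l; induction j; intros [|x l] H; simpl in *; try lia; auto.
  rewrite IHj by lia. destruct l; simpl in *; [lia|reflexivity].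
Qed.

Lemma last_map {A B} (f : A -> B) l d : last (map f l) (f d) = f (last l d).
Proof. induction l; simpl; auto. destruct l; simpl in *; auto. Qed.

Lemma Forall_skipn' {A} (P : A -> Prop) l j : List.Forall P l -> List.Forall P (skipn j l).
Proof. revert l; induction j; intros [|x l] H; simpl; auto. inversion H; auto. Qed.

Lemma Forall_firstn' {A} (P : A -> Prop) l j : List.Forall P l -> List.Forall P (firstn j l).
Proof. revert l; induction j; intros [|x l] H; simpl; auto. inversion H; auto. Qed.

Lemma good_combine ks es : List.Forall (fun x => (0 < x)%nat) ks -> List.Forall (fun e => -1 <= e <= 1) es -> good (combine ks es).
Proof.
  revert es; induction ks; intros [|e es] H1 H2; simpl; constructor.
  inversion H1; inversion H2; simpl; split; auto; lia.
  inversion H1; inversion H2; apply IHks; auto.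
Qed.

Lemma sign_bound l : List.Forall is_sign l -> List.Forall (fun e => -1 <= e <= 1) l.
Proof. apply Forall_impl. intros a [-> | ->]; lra. Qed.

Lemma sign_mul a b : is_sign a -> is_sign b -> is_sign (a * b).
Proof. intros [-> | ->] [-> | ->]; [left|right|right|left]; ring. Qed.

Lemma sign_map s l : is_sign s -> List.Forall is_sign l -> List.Forall is_sign (map (Rmult s) l).
Proof. intros Hs H. apply Forall_map. eapply Forall_impl; [|exact H]. intros; apply sign_mul; auto. Qed.

Lemma sign_rvec l : List.Forall is_sign l -> List.Forall is_sign (rvec l).
Proof. induction 1; simpl; constructor; auto. apply sign_map; auto. Qed.

Lemma sign_pvec l : List.Forall is_sign l -> List.Forall is_sign (pvec l).
Proof. induction 1; simpl; constructor; auto. apply sign_mul; auto. apply prodR_sign; auto. Qed.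

Lemma Mtr_conv_rev l : good l -> l <> [] -> (2 <= fst (last l (0%nat, 0%R)))%nat ->
  ex_finite_lim_seq (fun N => Mtr N (rev l)).
Proof.
  intros Hg Hne H2. rewrite (app_removelast_last (0%nat, 0%R) Hne) in Hg |- *.
  rewrite rev_unit. destruct (last l (0%nat, 0%R)) as [k e] eqn:E. simpl in H2.
  apply Mtr_conv; auto. unfold good in *. apply Forall_app in Hg as [Hg1 Hg2].
  constructor. inversion Hg2; auto. apply Forall_rev; auto.
Qed.

Lemma weight_eq k1 etab P B X n : is_sign etab -> P = etab ->
  Mtr (n - 1)%nat B * X / INR n ^ (k1 + 1) * ((1 + P * (-1) ^ n) * (1 + etab * (-1) ^ n) / 2)
  = mterm (S k1) etab n * Mtr (n - 1)%nat B * X.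
Proof.
  intros He ->. unfold mterm. rewrite Nat.add_1_r.
  assert (E : (etab * (-1) ^ n) * (etab * (-1) ^ n) = 1).
  { destruct He as [-> | ->]; destruct (pow_m1 n) as [-> | ->]; ring. }
  replace ((1 + etab * (-1) ^ n) * (1 + etab * (-1) ^ n) / 2) with (1 + etab * (-1) ^ n) by (field_simplify; nra).
  unfold Rdiv. ring.
Qed.

Lemma weight_zero k1 etab P B X n : is_sign etab -> P = - etab ->
  Mtr (n - 1)%nat B * X / INR n ^ (k1 + 1) * ((1 + P * (-1) ^ n) * (1 + etab * (-1) ^ n) / 2) = 0.
Proof.
  intros He ->.
  assert (E : (etab * (-1) ^ n) * (etab * (-1) ^ n) = 1).
  { destruct He as [-> | ->]; destruct (pow_m1 n) as [-> | ->]; ring. }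
  replace ((1 + - etab * (-1) ^ n) * (1 + etab * (-1) ^ n)) with 0 by nra. unfold Rdiv; ring.
Qed.

Lemma weight_half k1 etab B X n :
  Mtr (n - 1)%nat B * X / INR n ^ (k1 + 1) * ((1 + 0 * (-1) ^ n) * (1 + etab * (-1) ^ n) / 2)
  = / 2 * (mterm (S k1) etab n * Mtr (n - 1)%nat B * X).
Proof. unfold mterm. rewrite Nat.add_1_r. unfold Rdiv. ring. Qed.

Lemma MConv_unfold k1 ks x xs l1 ls y ys :
  MConv (k1 :: ks) (x :: xs) (l1 :: ls) (y :: ys) =
  real (Lim_seq (fun N => sumR (fun n =>
        Mtr (n - 1)%nat (combine ks xs) * Mstr n (combine ls ys) / (INR n) ^ (k1 + l1)
        * ((1 + y * (-1) ^ n) * (1 + x * (-1) ^ n) / 2)) N)).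
Proof. reflexivity. Qed.

Lemma MConv_zero k1 ks x xs ys etab y :
  is_sign etab -> y = - etab ->
  MConv (k1 :: ks) (etab :: xs) (1%nat :: x) (y :: ys) = 0.
Proof.
  intros He Hy. rewrite MConv_unfold.
  rewrite (Lim_seq_ext _ (fun _ => 0)). rewrite Lim_seq_const. reflexivity.
  intros N. rewrite <- (sumR_zero N). apply sumR_ext. intros. apply weight_zero; auto.
Qed.

Theorem mainTheorem11 (k1 : nat) (ks : list nat) (m : list nat)
  (eta eps : list R) :
  (0 < k1)%nat -> List.Forall (fun x => (0 < x)%nat) ks ->
  List.Forall (fun x => (0 < x)%nat) m -> (0 < length m)%nat ->
  (2 <= last m 0)%nat ->
  length eta = S (length ks) -> length eps = length m ->
  List.Forall is_sign eta -> List.Forall is_sign eps ->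
  let p := length m in
  let etab := prodR eta in
  MMV (rev m ++ S k1 :: ks) (map (Rmult etab) (qvec eps) ++ pvec eta)
  = sumR (fun j =>
        (-1) ^ (j - 1) *
        MMV (rev (skipn (j - 1) m)) (qvec (skipn j eps) ++ [1])
        * MConv (k1 :: ks) (pvec eta)
                (1%nat :: firstn (j - 1) m) (pvec (firstn j eps))) p
  + sumR (fun j =>
        (-1) ^ (j - 1) *
        MMV (rev (skipn (j - 1) m)) (map Ropp (qvec (skipn j eps)) ++ [-1])
        * MConv (k1 :: ks) (pvec eta)
                (1%nat :: firstn (j - 1) m) (map Ropp (pvec (firstn j eps)))) p
  + 2 * (-1) ^ p *
    MConv (k1 :: ks) (pvec eta) (1%nat :: m) (0 :: map (Rmult etab) (rvec eps)).
Proof.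
  intros Hk1 Hks Hm Hp Hlast Heta Heps Heta_s Heps_s p etab.
  destruct eta as [|eta1 eta']; [simpl in Heta; lia|].
  destruct eps as [|e1 eps']; [simpl in Heps; lia|].
  set (eps := e1 :: eps') in *.
  assert (Hetab : is_sign etab) by (apply prodR_sign; auto).
  set (B' := combine ks (pvec eta')).
  set (L := combine m (map (Rmult etab) (rvec eps))).
  set (h := fun x => mterm (S k1) etab x * Mtr (x - 1)%nat B').
  assert (HgB : good B').
  { apply good_combine; auto. apply sign_bound, sign_pvec. inversion Heta_s; auto. }
  assert (HgL : good L).
  { apply good_combine; auto. apply sign_bound, sign_map, sign_rvec; auto. }
  assert (HlenL : length L = p).
  { unfold L. rewrite length_combine, length_map, length_rvec. unfold p. lia. }
  assert (Hpe : pvec (eta1 :: eta') = etab :: pvec eta') by reflexivity.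
  assert (HLl : combine (rev m ++ S k1 :: ks) (map (Rmult etab) (qvec eps) ++ pvec (eta1 :: eta'))
                = rev L ++ (S k1, etab) :: B').
  { rewrite combine_app by (rewrite length_rev, length_map, length_qvec; lia).
    unfold qvec. rewrite map_rev, combine_rev by (rewrite length_map, length_rvec; lia).
    rewrite Hpe. reflexivity. }
  assert (Hetab1 : -1 <= etab <= 1) by (destruct Hetab as [-> | ->]; lra).
  set (A := fun j => real (Lim_seq (fun N => Mtr N (rev (skipn j L))))).
  set (Bj := fun j => real (Lim_seq (sumR (fun x => h x * Mstr x (firstn j L))))).
  set (C := real (Lim_seq (sumR (fun x => h x * Mstr x L)))).
  assert (HA : forall j, (j < p)%nat -> is_lim_seq (fun N => Mtr N (rev (skipn j L))) (A j)).
  { intros j Hj. apply real_lim. apply Mtr_conv_rev.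
    - apply Forall_skipn'; auto.
    - intros E. assert (length (skipn j L) = 0%nat) by (rewrite E; reflexivity).
      rewrite length_skipn in H. lia.
    - rewrite last_skipn by lia. rewrite <- (last_map fst). unfold L. rewrite map_fst_combine.
      exact Hlast. rewrite length_map, length_rvec. lia. }
  assert (HB : forall j, is_lim_seq (sumR (fun x => h x * Mstr x (firstn j L))) (Bj j)).
  { intros j. apply real_lim. apply h_conv; [lia|auto|auto|apply Forall_firstn'; auto]. }
  assert (HC : is_lim_seq (sumR (fun x => h x * Mstr x L)) C).
  { apply real_lim. apply h_conv; [lia|auto|auto|auto]. }
  assert (HLHS : MMV (rev m ++ S k1 :: ks) (map (Rmult etab) (qvec eps) ++ pvec (eta1 :: eta'))
     = sum0 (fun j => (-1) ^ j * A j * Bj j) p + (-1) ^ p * C).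
  { unfold MMV. rewrite HLl.
    assert (Hl : is_lim_seq (fun N => Mtr N (rev L ++ (S k1, etab) :: B'))
                   (sum0 (fun j => (-1) ^ j * A j * Bj j) p + (-1) ^ p * C)).
    { eapply is_lim_seq_ext. intros N. symmetry. apply finite_id.
      rewrite HlenL. apply is_lim_seq_plus'.
      - apply lim_sum0. intros j Hj. apply is_lim_seq_mult'. 
        apply (is_lim_seq_scal_l _ ((-1) ^ j) (A j)). apply HA; auto. apply HB.
      - apply (is_lim_seq_scal_l _ ((-1) ^ p) C). apply HC. }
    rewrite (is_lim_seq_unique _ _ Hl). reflexivity. }
  rewrite HLHS. clear HLHS.
  rewrite !sumR_sum0_shift, <- sum0_plus.
  assert (H3 : MConv (k1 :: ks) (pvec (eta1 :: eta')) (1%nat :: m) (0 :: map (Rmult etab) (rvec eps)) = / 2 * C).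
  { rewrite Hpe, MConv_unfold.
    rewrite (Lim_seq_ext _ (fun N => / 2 * sumR (fun x => h x * Mstr x L) N)).
    - rewrite (is_lim_seq_unique _ _ (is_lim_seq_scal_l _ (/ 2) _ HC)). reflexivity.
    - intros N. rewrite <- sumR_scal. apply sumR_ext. intros n Hn. rewrite weight_half. reflexivity. }
  rewrite H3. replace (2 * (-1) ^ p * (/ 2 * C)) with ((-1) ^ p * C) by field.
  f_equal. apply sum0_ext. intros j Hj. replace (S j - 1)%nat with j by lia.
  assert (Hsfe : List.Forall is_sign (firstn (S j) eps)) by (apply Forall_firstn'; auto).
  set (P := prodR (firstn (S j) eps)).
  assert (HP : is_sign P) by (apply prodR_sign; auto).
  set (tau := etab * P).
  assert (Htau : is_sign tau) by (apply sign_mul; auto).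
  assert (HPj : P = prodR (firstn j eps) * nth j eps 0).
  { unfold P. rewrite (firstn_S_nth eps j 0) by lia. rewrite prodR_app. simpl. ring. }
  assert (HA' : forall N, Mtr N (rev (skipn j L)) =
     Mtr N (combine (rev (skipn j m)) (map (Rmult tau) (qvec (skipn (S j) eps) ++ [1])))).
  { intros N. f_equal. unfold L.
    rewrite combine_skipn, <- combine_rev by (rewrite !length_skipn, length_map, length_rvec; lia).
    f_equal. rewrite skipn_map, rvec_skipn, (skipn_nth eps j 0) by lia.
    unfold qvec. replace (rev (rvec (skipn (S j) eps)) ++ [1]) with (rev (1 :: rvec (skipn (S j) eps))) by reflexivity.
    rewrite map_rev. f_equal. cbn [rvec map]. f_equal.
    - unfold tau. rewrite HPj. ring.
    - rewrite !map_map. apply map_ext. intros. unfold tau. rewrite HPj. ring. }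
  assert (HX : pvec (firstn j eps') = map (Rmult P) (firstn j (rvec eps))).
  { pose proof (pvec_rvec _ Hsfe) as H. rewrite firstn_length_le in H by lia.
    change (pvec (firstn (S j) eps)) with (P :: pvec (firstn j eps')) in H.
    rewrite firstn_cons in H. fold P in H.
    rewrite rvec_firstn, firstn_firstn, Nat.min_l in H by lia.
    cbn [map] in H. injection H as _ H. exact H. }
  assert (HfL : firstn j L = combine (firstn j m) (map (Rmult etab) (firstn j (rvec eps)))).
  { unfold L. rewrite combine_firstn, firstn_map. reflexivity. }
  assert (Hpv : pvec (firstn (S j) eps) = P :: pvec (firstn j eps')) by reflexivity.
  assert (Hconv : forall y ys, y = etab -> ys = map (Rmult etab) (firstn j (rvec eps)) ->
     MConv (k1 :: ks) (pvec (eta1 :: eta')) (1%nat :: firstn j m) (y :: ys) = Bj j).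
  { intros y ys Hy Hys. rewrite Hpe, MConv_unfold. unfold Bj. f_equal. apply Lim_seq_ext.
    intros N. apply sumR_ext. intros n Hn. rewrite weight_eq by auto. rewrite Hys, <- HfL. reflexivity. }
  assert (Hmmv : forall S, (forall N, Mtr N (rev (skipn j L)) = Mtr N (combine (rev (skipn j m)) S)) ->
     MMV (rev (skipn j m)) S = A j).
  { intros S HS. unfold MMV, A. f_equal. apply Lim_seq_ext. intros; symmetry; auto. }
  rewrite Hpv. cbn [map].
  destruct Htau as [Ht | Ht].
  - assert (HPe : P = etab).
    { pose proof (sign_sq etab Hetab). replace P with (etab * etab * P) by (rewrite H; ring).
      replace (etab * etab * P) with (etab * tau) by (unfold tau; ring). rewrite Ht; ring. }
    rewrite (Hmmv (qvec (skipn (S j) eps) ++ [1])).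
    2:{ intros N. rewrite HA', Ht. f_equal. f_equal. rewrite map_ext with (g := fun x => x) by (intros; ring). apply map_id. }
    rewrite (Hconv P). 2: auto. 2:{ rewrite HX, HPe. reflexivity. }
    rewrite Hpe, MConv_zero; auto. ring. rewrite HPe. reflexivity.
  - assert (HPe : P = - etab).
    { pose proof (sign_sq etab Hetab). replace P with (etab * etab * P) by (rewrite H; ring).
      replace (etab * etab * P) with (etab * tau) by (unfold tau; ring). rewrite Ht; ring. }
    rewrite (Hmmv (map Ropp (qvec (skipn (S j) eps)) ++ [-1])).
    2:{ intros N. rewrite HA', Ht. f_equal. f_equal. rewrite map_app. f_equal. apply map_ext; intros; ring.
        simpl. f_equal. ring. }
    rewrite (Hconv (- P)). 2: rewrite HPe; ring. 2:{ rewrite HX, map_map. apply map_ext. intros. rewrite HPe. ring. }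
    rewrite Hpe, MConv_zero; auto. ring.
Qed.
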